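(* Let $a$, $b$, $c$ be pairwise coprime positive integers with $a+b+c$ even. Then for all integers $p,q\geq1$ and all $x,y,z\in\mathbb{R}$, \begin{align*} a^{1-p}b^{1-q}S_{p,q}(a,b,c:x,y,z) &=\sum_{j=1}^{p}\binom{p-1}{j-1}a^{1-j}c^{1+j-p-q}S_{p+q-j,j}(c,-a,b:z,x,y)\\ &\quad+\sum_{h=1}^{q}\binom{q-1}{h-1}(-1)^{h}b^{1-h}c^{1+h-p-q}S_{p+q-h,h}(c,b,a:z,-y,x). \end{align*}
   Context: $E_n(x)$ denotes the $n$th Euler polynomial, defined by $\frac{2e^{xt}}{e^t+1}=\sum_{n\ge0}E_n(x)\frac{t^n}{n!}$. The $n$th Euler function $\mathcal{E}_n$ ($n\ge0$) is defined by $\mathcal{E}_n(x)=E_n(x)$ for $0\le x<1$ and $\mathcal{E}_n(x+m)=(-1)^m\mathcal{E}_n(x)$ for $m\in\mathbb{Z}$. For integers $a,b$, a positive integer $c$, integers $p,q\ge1$ and real $x,y,z$, define $$S_{p,q}(a,b,c:x,y,z)=\sum_{\mu=0}^{c-1}(-1)^{\mu}\mathcal{E}_{p-1}\Big(a\frac{\mu+z}{c}+x\Big)\mathcal{E}_{q-1}\Big(b\frac{\mu+z}{c}+y\Big).$$ *)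

(* Defs.v *)
From Stdlib Require Import Reals ZArith.
From Coquelicot Require Import Coquelicot.
Open Scope R_scope.

Definition euler_poly (n : nat) (x : R) : R :=
  Derive_n (fun t => 2 * exp (x * t) / (exp t + 1)) n 0.

Definition sgnZ (m : Z) : R := if Z.even m then 1 else -1.

(* n-th Euler function: E_n on [0,1), extended by E(x+m) = (-1)^m E(x).
   Int_part x is the floor of x. *)
Definition euler_fun (n : nat) (x : R) : R :=
  sgnZ (Int_part x) * euler_poly n (x - IZR (Int_part x)).

Definition S_pq (p q : nat) (a b c : Z) (x y z : R) : R :=
  sum_f_R0 (fun mu : nat =>
      (-1) ^ mu
      * euler_fun (p - 1) (IZR a * ((INR mu + z) / IZR c) + x)
      * euler_fun (q - 1) (IZR b * ((INR mu + z) / IZR c) + y))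
    (Z.to_nat c - 1).

(* Main.v *)
Require Import Defs.
From Stdlib Require Import Reals ZArith Lia Lra Psatz.
From Coquelicot Require Import Coquelicot.
Open Scope R_scope.

Lemma dplus (f g : R -> R) x df dg :
  is_derive f x df -> is_derive g x dg -> is_derive (fun y => f y + g y) x (df + dg).
Proof. intros; apply (is_derive_plus f g x df dg); auto. Qed.
Lemma dmult (f g : R -> R) x df dg :
  is_derive f x df -> is_derive g x dg -> is_derive (fun y => f y * g y) x (df * g x + f x * dg).
Proof. intros; apply Derive.is_derive_mult; auto. Qed.
Lemma dconst (a x : R) : is_derive (fun _ => a) x 0.
Proof. apply (is_derive_const a x). Qed.
Lemma dlin (a b x : R) : is_derive (fun y => a * y + b) x a.
Proof.
  auto_derive; auto; ring.
Qed.

Definition HD (f : R -> R) (F : nat -> R -> R) :=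
  (forall x, F 0%nat x = f x) /\ forall n x, is_derive (F n) x (F (S n) x).

Lemma HD_Derive_n f F : HD f F -> forall n x, Derive_n f n x = F n x.
Proof.
  intros [H0 H1] n. induction n; intros x; simpl.
  - now rewrite H0.
  - rewrite (Derive_ext _ (F n) x IHn). apply is_derive_unique, H1.
Qed.

Lemma HD_ex f F : HD f F -> forall n x, ex_derive_n f n x.
Proof.
  intros H n x. destruct n. simpl; auto. simpl.
  exists (F (S n) x).
  apply is_derive_ext with (F n). intros t; symmetry; apply (HD_Derive_n f F H).
  apply H.
Qed.

Lemma HD_ext f g F : (forall x, f x = g x) -> HD f F -> HD g F.
Proof. intros E [H0 H1]; split; auto. intros; rewrite H0; auto. Qed.

Lemma HD_ext2 f F G : (forall n x, F n x = G n x) -> HD f F -> HD f G.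
Proof.
  intros E [H0 H1]; split. intros; rewrite <- E; auto.
  intros n x. apply is_derive_ext with (F n). auto. rewrite <- E. auto.
Qed.

Lemma HD_shift f F m : HD f F -> HD (F m) (fun n => F (m + n)%nat).
Proof.
  intros [H0 H1]; split. intros; rewrite Nat.add_0_r; auto.
  intros n x. replace (m + S n)%nat with (S (m + n)) by lia. auto.
Qed.

Lemma HD_const a : HD (fun _ => a) (fun n _ => match n with O => a | _ => 0 end).
Proof. split. auto. intros n x; destruct n; apply dconst. Qed.

Lemma HD_scal k f F : HD f F -> HD (fun x => k * f x) (fun n x => k * F n x).
Proof.
  intros [H0 H1]; split. intros; rewrite H0; auto.
  intros; apply is_derive_scal; auto.
Qed.

Lemma HD_plus f g F G : HD f F -> HD g G -> HD (fun x => f x + g x) (fun n x => F n x + G n x).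
Proof.
  intros [H0 H1] [G0 G1]; split. intros; rewrite H0, G0; auto.
  intros; apply dplus; auto.
Qed.

Lemma HD_sum (f : nat -> R -> R) F N :
  (forall i, HD (f i) (F i)) ->
  HD (fun x => sum_f_R0 (fun i => f i x) N) (fun n x => sum_f_R0 (fun i => F i n x) N).
Proof.
  intros H. induction N; simpl.
  - apply H.
  - apply HD_plus; auto.
Qed.

Lemma HD_lin f F a b : HD f F -> HD (fun x => f (a * x + b)) (fun n x => a ^ n * F n (a * x + b)).
Proof.
  intros [H0 H1]; split. intros; simpl; rewrite H0; ring.
  intros n x. apply is_derive_ext with (fun x => a ^ n * F n (a * x + b)). auto.
  replace (a ^ S n * F (S n) (a * x + b)) with (a ^ n * (a * F (S n) (a * x + b))) by (simpl; ring).
  apply is_derive_scal.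
  apply (is_derive_comp (F n) (fun x => a * x + b) x (F (S n) (a * x + b)) a).
  apply H1. apply dlin.
Qed.

Lemma HD_exp a : HD (fun x => exp (a * x)) (fun n x => a ^ n * exp (a * x)).
Proof.
  split. intros; simpl; ring.
  intros n x. replace (a ^ S n * exp (a * x)) with (a ^ n * (a * exp (a * x))) by (simpl; ring).
  apply is_derive_scal.
  apply is_derive_ext with (fun x => exp (a * x + 0)). intros; rewrite Rplus_0_r; auto.
  replace (a * exp (a * x)) with (a * exp (a * x + 0)) by (rewrite Rplus_0_r; auto).
  apply (is_derive_comp exp (fun x => a * x + 0) x (exp (a * x + 0)) a).
  apply is_derive_exp. apply dlin.
Qed.

Lemma deq (f : R -> R) x l l' : is_derive f x l -> l = l' -> is_derive f x l'.
Proof. intros H <-; auto. Qed.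

Fixpoint sumn (f : nat -> R) (n : nat) : R :=
  match n with O => 0 | S n => sumn f n + f n end.

Lemma sumn_ext f g n : (forall i, (i < n)%nat -> f i = g i) -> sumn f n = sumn g n.
Proof. induction n as [|n IH]; simpl; intros H; auto. rewrite IH, H; auto. Qed.
Lemma sumn_plus f g n : sumn (fun i => f i + g i) n = sumn f n + sumn g n.
Proof. induction n as [|n IH]; simpl; [ring|]. rewrite IH; ring. Qed.
Lemma sumn_minus f g n : sumn (fun i => f i - g i) n = sumn f n - sumn g n.
Proof. induction n as [|n IH]; simpl; [ring|]. rewrite IH; ring. Qed.
Lemma sumn_scal k f n : sumn (fun i => k * f i) n = k * sumn f n.
Proof. induction n as [|n IH]; simpl; [ring|]. rewrite IH; ring. Qed.
Lemma sumn_first f n : sumn f (S n) = f 0%nat + sumn (fun i => f (S i)) n.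
Proof. induction n as [|n IH]; [simpl; ring|]. change (sumn f (S (S n))) with (sumn f (S n) + f (S n)). rewrite IH; simpl; ring. Qed.
Lemma sumn_zero f n : (forall i, (i < n)%nat -> f i = 0) -> sumn f n = 0.
Proof. intros; rewrite (sumn_ext f (fun _ => 0)); auto. clear H. induction n as [|n IH]; simpl; auto. rewrite IH; ring. Qed.
Lemma sumn_swap (f : nat -> nat -> R) n m :
  sumn (fun i => sumn (fun j => f i j) m) n = sumn (fun j => sumn (fun i => f i j) n) m.
Proof.
  induction n as [|n IH]; simpl. symmetry; apply sumn_zero; auto.
  rewrite IH, <- sumn_plus. auto.
Qed.
Lemma sumn_rev f n : sumn f n = sumn (fun i => f (n - 1 - i)%nat) n.
Proof.
  induction n as [|n IH]. auto.
  rewrite (sumn_first (fun i => f (S n - 1 - i)%nat)).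
  change (sumn f (S n)) with (sumn f n + f n). rewrite IH.
  replace (S n - 1 - 0)%nat with n by lia. rewrite Rplus_comm. f_equal.
  apply sumn_ext; intros; f_equal; lia.
Qed.
Lemma sumn_f_R0 f n : sum_f_R0 f n = sumn f (S n).
Proof. induction n as [|n IH]; simpl; [ring|]. rewrite IH; simpl; auto. Qed.

Fixpoint binom (n k : nat) : R :=
  match n, k with
  | O, O => 1
  | O, S _ => 0
  | S _, O => 1
  | S n', S k' => binom n' k' + binom n' (S k')
  end.

Lemma binom_big n k : (n < k)%nat -> binom n k = 0.
Proof.
  revert k; induction n as [|n IH]; intros k H; destruct k; simpl; try lia; auto.
  rewrite !IH; try lia. ring.
Qed.

Lemma binom_C n k : (k <= n)%nat -> binom n k = Binomial.C n k.
Proof.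
  revert k; induction n as [|n IHn]; intros k H.
  - destruct k; try lia. unfold Binomial.C; simpl. field.
  - destruct k. unfold Binomial.C. simpl binom. rewrite Nat.sub_0_r. change (Factorial.fact 0) with 1%nat. simpl INR. field. apply (INR_fact_neq_0 (S n)).
    simpl binom. destruct (Nat.eq_dec k n).
    + subst. rewrite (binom_big n (S n)) by lia. rewrite IHn by lia.
      unfold Binomial.C. rewrite !Nat.sub_diag. field. repeat split; apply not_0_INR; apply fact_neq_0.
    + rewrite !IHn by lia. apply Binomial.pascal. lia.
Qed.

Definition Leib (F G : nat -> R -> R) n x :=
  sumn (fun k => binom n k * F k x * G (n - k)%nat x) (S n).

Lemma dsumn (f : nat -> R -> R) df N x :
  (forall i, is_derive (f i) x (df i)) ->
  is_derive (fun y => sumn (fun i => f i y) N) x (sumn df N).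
Proof.
  intros H; induction N as [|N IH]; simpl. apply dconst. apply dplus; auto.
Qed.

Lemma HD_mult f g F G : HD f F -> HD g G -> HD (fun x => f x * g x) (Leib F G).
Proof.
  intros [F0 F1] [G0 G1]; split.
  - intros x; unfold Leib; simpl. rewrite F0, G0. ring.
  - intros n x. unfold Leib.
    eapply is_derive_ext. { intros t; reflexivity. }
    replace (sumn (fun k => binom (S n) k * F k x * G (S n - k)%nat x) (S (S n))) with
      (sumn (fun k => binom n k * (F (S k) x * G (n - k)%nat x + F k x * G (S (n - k)) x)) (S n)).
    + apply dsumn. intros i.
      apply (is_derive_ext (fun y => binom n i * (F i y * G (n - i)%nat y))); [intros t; simpl; ring|].
      apply is_derive_scal. apply dmult; auto.
    + rewrite (sumn_first (fun k => binom (S n) k * F k x * G (S n - k)%nat x)).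
      simpl binom at 1. rewrite Nat.sub_0_r.
      rewrite (sumn_ext (fun i => binom (S n) (S i) * F (S i) x * G (S n - S i)%nat x)
         (fun i => binom n i * F (S i) x * G (n - i)%nat x + binom n (S i) * F (S i) x * G (n - i)%nat x)).
      2:{ intros; simpl binom; simpl Nat.sub. ring. }
      rewrite sumn_plus.
      rewrite (sumn_ext _ (fun k => binom n k * F (S k) x * G (n - k)%nat x + binom n k * F k x * G (S (n - k)) x)) by (intros; ring).
      rewrite sumn_plus.
      rewrite (sumn_first (fun k => binom n k * F k x * G (S (n - k)) x)).
      simpl sumn at 4.
      rewrite (binom_big n (S n)) by lia.
      replace (binom n 0) with 1 by (destruct n; auto).
      rewrite Nat.sub_0_r.
      rewrite (sumn_ext (fun i => binom n (S i) * F (S i) x * G (S (n - S i)) x)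
                        (fun i => binom n (S i) * F (S i) x * G (n - i)%nat x)).
      2:{ intros. f_equal. f_equal. lia. }
      change (binom (S n) 0) with 1. ring.
Qed.
Lemma sumn_S f n : sumn f (S n) = sumn f n + f n.
Proof. reflexivity. Qed.

Definition hh (s : R) : R := / (exp s + 1).

Fixpoint cc (n k : nat) : R :=
  match n with
  | O => match k with 1%nat => 1 | _ => 0 end
  | S n' => match k with O => 0 | S k' => INR k' * cc n' k' - INR (S k') * cc n' (S k') end
  end.

Lemma cc_big n k : (S n < k)%nat -> cc n k = 0.
Proof.
  revert k; induction n as [|n IH]; intros k H.
  - destruct k as [|[|k]]; simpl; auto; lia.
  - destruct k as [|k]. lia. simpl. rewrite !IH by lia. ring.
Qed.

Definition HH n s := sumn (fun k => cc n k * hh s ^ k) (S (S n)).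

Lemma dhh s : is_derive hh s (hh s ^ 2 - hh s).
Proof.
  unfold hh. assert (Hp : exp s + 1 <> 0) by (generalize (exp_pos s); lra).
  apply (is_derive_ext (fun y => / (exp y + 1))). auto.
  eapply deq. apply (is_derive_inv (fun y => exp y + 1)); auto.
  apply dplus. apply is_derive_exp. apply dconst.
  simpl. field. auto.
Qed.

Lemma dhhk s k : is_derive (fun y => hh y ^ k) s (INR k * (hh s ^ S k - hh s ^ k)).
Proof.
  eapply deq. apply is_derive_pow, dhh.
  destruct k. simpl; ring. simpl Init.Nat.pred. simpl. ring.
Qed.

Lemma HD_hh : HD hh HH.
Proof.
  split.
  - intros x; unfold HH; simpl. ring.
  - intros n x. unfold HH.
    apply (is_derive_ext (fun y => sumn (fun k => cc n k * hh y ^ k) (S (S n)))). auto.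
    replace (sumn (fun k => cc (S n) k * hh x ^ k) (S (S (S n)))) with
      (sumn (fun k => cc n k * (INR k * (hh x ^ S k - hh x ^ k))) (S (S n))).
    + apply dsumn. intros i. apply is_derive_scal. apply dhhk.
    + rewrite (sumn_first (fun k => cc (S n) k * hh x ^ k)). simpl cc at 1.
      rewrite (sumn_ext (fun i => cc (S n) (S i) * hh x ^ S i) (fun k => INR k * cc n k * hh x ^ S k - INR (S k) * cc n (S k) * hh x ^ S k)).
      2:{ intros. simpl; ring. }
      rewrite sumn_minus.
      rewrite (sumn_ext _ (fun k => INR k * cc n k * hh x ^ S k - INR k * cc n k * hh x ^ k)) by (intros; ring).
      rewrite sumn_minus.
      assert (E : sumn (fun k => INR k * cc n k * hh x ^ k) (S (S (S n))) =
                  sumn (fun k => INR k * cc n k * hh x ^ k) (S (S n))).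
      { rewrite sumn_S, (cc_big n (S (S n))) by lia. ring. }
      rewrite <- E, (sumn_first (fun k => INR k * cc n k * hh x ^ k)). replace (cc (S n) 0) with 0 by reflexivity. replace (INR 0) with 0 by reflexivity. ring.
Qed.

Definition fr (u : R) := u - IZR (Int_part u).
Definition eg (u s : R) : R := (2 * sgnZ (Int_part u)) * (exp (fr u * s) * hh s).
Definition EG (u : R) n s := (2 * sgnZ (Int_part u)) * Leib (fun n s => fr u ^ n * exp (fr u * s)) HH n s.

Lemma HD_eg u : HD (eg u) (EG u).
Proof.
  unfold eg, EG. apply HD_scal. apply HD_mult. apply HD_exp. apply HD_hh.
Qed.

Lemma euler_fun_eg n u : euler_fun n u = EG u n 0.
Proof.
  rewrite <- (HD_Derive_n _ _ (HD_eg u)).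
  unfold euler_fun, euler_poly.
  rewrite <- Derive_n_scal_l. apply Derive_n_ext. intros t.
  unfold eg, hh, fr. field. generalize (exp_pos t); lra.
Qed.

Definition Op (P Q : nat) (H : R -> R -> R) :=
  Derive_n (fun s => Derive_n (fun t => H s t) Q 0) P 0.

Lemma Op_HD P Q H Fi Fo :
  (forall s, HD (fun t => H s t) (Fi s)) ->
  HD (fun s => Fi s Q 0) Fo ->
  Op P Q H = Fo P 0.
Proof.
  intros Hi Ho. unfold Op.
  rewrite (Derive_n_ext _ (fun s => Fi s Q 0)).
  apply (HD_Derive_n _ _ Ho).
  intros s. apply (HD_Derive_n _ _ (Hi s)).
Qed.

Definition lf (u : R) : Z := (- Int_part (- u) - 1)%Z.

Lemma fl_spec u : IZR (Int_part u) <= u < IZR (Int_part u) + 1.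
Proof. destruct (base_Int_part u). lra. Qed.

Lemma lf_spec u : IZR (lf u) < u <= IZR (lf u) + 1.
Proof. unfold lf. destruct (fl_spec (- u)). rewrite minus_IZR, opp_IZR. lra. Qed.

Lemma fl_unique u n : IZR n <= u < IZR n + 1 -> Int_part u = n.
Proof.
  intros [H1 H2]. destruct (fl_spec u) as [H3 H4].
  assert (A : (Int_part u < n + 1)%Z) by (apply lt_IZR; rewrite plus_IZR; lra).
  assert (B : (n < Int_part u + 1)%Z) by (apply lt_IZR; rewrite plus_IZR; lra).
  lia.
Qed.

Lemma fl_le n u : IZR n <= u -> (n <= Int_part u)%Z.
Proof.
  intros H. destruct (fl_spec u). assert (n < Int_part u + 1)%Z by (apply lt_IZR; rewrite plus_IZR; lra). lia.
Qed.

Lemma fl_lt n u : u < IZR n -> (Int_part u < n)%Z.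
Proof. intros H. destruct (fl_spec u). apply lt_IZR; lra. Qed.

Lemma fl_mono u v : u <= v -> (Int_part u <= Int_part v)%Z.
Proof. intros H. apply fl_le. destruct (fl_spec u). lra. Qed.

Lemma lf_fl u : (lf u = Int_part u /\ IZR (Int_part u) < u) \/ (lf u = Int_part u - 1 /\ u = IZR (Int_part u))%Z.
Proof.
  destruct (lf_spec u), (fl_spec u).
  assert (A : (lf u <= Int_part u)%Z) by (apply fl_le; lra).
  assert (B : (Int_part u - 1 <= lf u)%Z).
  { assert (Int_part u < lf u + 2)%Z by (apply lt_IZR; rewrite plus_IZR; simpl; lra). lia. }
  destruct (Z.eq_dec (lf u) (Int_part u)) as [E|E].
  - left; split; auto. rewrite <- E; lra.
  - right; split. lia. assert (lf u = Int_part u - 1)%Z by lia.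
    rewrite H3, minus_IZR in H0. simpl in H0. lra.
Qed.

Lemma fl_int (k : Z) : Int_part (IZR k) = k.
Proof. apply fl_unique; lra. Qed.
Lemma lf_int (k : Z) : lf (IZR k) = (k - 1)%Z.
Proof. unfold lf. rewrite <- opp_IZR, fl_int. lia. Qed.

Lemma fl_shift u (k : Z) : Int_part (u + IZR k) = (Int_part u + k)%Z.
Proof. apply fl_unique. rewrite plus_IZR. destruct (fl_spec u); lra. Qed.
Lemma lf_shift u (k : Z) : lf (u + IZR k) = (lf u + k)%Z.
Proof. unfold lf. replace (- (u + IZR k)) with (- u + IZR (- k)) by (rewrite opp_IZR; ring).
  rewrite fl_shift. lia. Qed.

(* integer-range sums: sum of f k for m < k <= n *)
Definition SZ (m n : Z) (f : Z -> R) : R :=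
  sumn (fun j => f (m + 1 + Z.of_nat j)%Z) (Z.to_nat (n - m)).

Lemma SZ_nil m f : SZ m m f = 0.
Proof. unfold SZ. rewrite Z.sub_diag. reflexivity. Qed.

Lemma SZ_split m k n f : (m <= k <= n)%Z -> SZ m n f = SZ m k f + SZ k n f.
Proof.
  intros H. unfold SZ.
  replace (Z.to_nat (n - m)) with (Z.to_nat (k - m) + Z.to_nat (n - k))%nat by lia.
  generalize (Z.to_nat (n - k)) as p. intros p. induction p as [|p IH].
  - rewrite Nat.add_0_r; simpl; ring.
  - rewrite Nat.add_succ_r, !sumn_S, IH, Rplus_assoc. apply Rplus_eq_compat_l, Rplus_eq_compat_l, f_equal; lia.
Qed.

Lemma SZ_one n f : SZ (n - 1) n f = f n.
Proof. unfold SZ. replace (n - (n - 1))%Z with 1%Z by lia. simpl. rewrite Rplus_0_l. f_equal. lia. Qed.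

Lemma SZ_one' n f : SZ n (n + 1) f = f (n + 1)%Z.
Proof. replace n with (n + 1 - 1)%Z at 1 by lia. apply SZ_one. Qed.

Lemma SZ_period (P : nat) f m m' :
  (forall k, f (k + Z.of_nat P)%Z = f k) ->
  SZ m (m + Z.of_nat P) f = SZ m' (m' + Z.of_nat P) f.
Proof.
  intros Hp.
  assert (step : forall m, SZ m (m + Z.of_nat P) f = SZ (m + 1) (m + 1 + Z.of_nat P) f).
  { intros k. destruct P as [|P].
    - simpl. rewrite !Z.add_0_r, !SZ_nil. auto.
    - rewrite (SZ_split k (k + 1) (k + Z.of_nat (S P))) by lia.
      rewrite (SZ_split (k + 1) (k + Z.of_nat (S P)) (k + 1 + Z.of_nat (S P))) by lia.
      replace (k + 1 + Z.of_nat (S P))%Z with (k + Z.of_nat (S P) + 1)%Z by lia.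
      rewrite !SZ_one'.
      replace (k + Z.of_nat (S P) + 1)%Z with (k + 1 + Z.of_nat (S P))%Z by lia.
      rewrite Hp. ring. }
  assert (gen : forall (n : nat) m, SZ m (m + Z.of_nat P) f = SZ (m + Z.of_nat n) (m + Z.of_nat n + Z.of_nat P) f).
  { induction n as [|n IH]; intros k. simpl; rewrite !Z.add_0_r; auto.
    rewrite IH, step. f_equal; lia. }
  destruct (Z.le_ge_cases m m') as [H|H].
  - rewrite (gen (Z.to_nat (m' - m)) m). f_equal; lia.
  - rewrite (gen (Z.to_nat (m - m')) m'). f_equal; lia.
Qed.

Definition NN d o (t : R) := Int_part (d * t + o).
Definition MM d o (t : R) := lf (d * t + o).
Definition TT d o (k : Z) := (IZR k - o) / d.

Section Form.
Variables d o : R.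
Hypothesis dpos : 0 < d.

Lemma TT_eq k : d * TT d o k + o = IZR k.
Proof. unfold TT. field. lra. Qed.

Lemma NN_mono t t' : t <= t' -> (NN d o t <= NN d o t')%Z.
Proof. intros; apply fl_mono. apply Rplus_le_compat_r, Rmult_le_compat_l; lra. Qed.

Lemma TT_le_iff k t : TT d o k <= t <-> IZR k <= d * t + o.
Proof.
  generalize (TT_eq k); intros E. split; intros H.
  - rewrite <- E. apply Rplus_le_compat_r, Rmult_le_compat_l; lra.
  - destruct (Rle_dec (TT d o k) t); auto. exfalso.
    assert (d * t < d * TT d o k) by (apply Rmult_lt_compat_l; lra). lra.
Qed.

Lemma TT_lt_iff k t : t < TT d o k <-> d * t + o < IZR k.
Proof.
  split; intros H.
  - destruct (Rlt_dec (d * t + o) (IZR k)) as [h|h]; auto. exfalso.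
    assert (h' : IZR k <= d * t + o) by lra. apply (proj2 (TT_le_iff k t)) in h'. lra.
  - destruct (Rlt_dec t (TT d o k)) as [h|h]; auto. exfalso.
    assert (h' : TT d o k <= t) by lra. apply TT_le_iff in h'. lra.
Qed.

Lemma TT_NN_le t : TT d o (NN d o t) <= t.
Proof. apply TT_le_iff. unfold NN. destruct (fl_spec (d * t + o)); lra. Qed.

Lemma TT_gt t k : (NN d o t < k)%Z -> t < TT d o k.
Proof.
  intros H. apply TT_lt_iff. unfold NN in H. destruct (fl_spec (d * t + o)).
  assert (IZR (Int_part (d * t + o)) + 1 <= IZR k) by (rewrite <- succ_IZR; apply IZR_le; lia).
  lra.
Qed.

Lemma NN_ge k t : TT d o k <= t -> (k <= NN d o t)%Z.
Proof. intros H. apply TT_le_iff in H. apply fl_le; auto. Qed.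

Lemma NN_TT k : NN d o (TT d o k) = k.
Proof. unfold NN. rewrite TT_eq. apply fl_int. Qed.
Lemma MM_TT k : MM d o (TT d o k) = (k - 1)%Z.
Proof. unfold MM. rewrite TT_eq. apply lf_int. Qed.

Lemma TT_MM_lt t : TT d o (MM d o t) < t.
Proof.
  unfold MM. destruct (lf_spec (d * t + o)).
  pose proof (TT_eq (lf (d * t + o))).
  assert (d * TT d o (lf (d * t + o)) < d * t) by lra.
  destruct (Rlt_dec (TT d o (lf (d * t + o))) t) as [h|h]; auto.
  assert (d * t <= d * TT d o (lf (d * t + o))) by (apply Rmult_le_compat_l; lra). lra.
Qed.

Lemma NN_between m t : TT d o (MM d o m) <= t -> t < m -> NN d o t = MM d o m.
Proof.
  intros H1 H2. apply Z.le_antisymm.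
  - destruct (lf_spec (d * m + o)). unfold MM. apply Z.lt_succ_r. apply fl_lt.
    rewrite succ_IZR.
    assert (d * t < d * m) by (apply Rmult_lt_compat_l; lra). lra.
  - apply NN_ge; auto.
Qed.

Lemma MM_cases t : MM d o t = NN d o t \/ (MM d o t = NN d o t - 1 /\ TT d o (NN d o t) = t)%Z.
Proof.
  unfold MM, NN. destruct (lf_fl (d * t + o)) as [[A B]|[A B]].
  - left; auto.
  - right; split; auto. unfold TT. rewrite <- B. field. lra.
Qed.

Lemma MM_le_NN t : (MM d o t <= NN d o t)%Z.
Proof. destruct (MM_cases t) as [A|[A _]]; lia. Qed.

End Form.

Lemma Rmax_or x y : Rmax x y = x \/ Rmax x y = y.
Proof. unfold Rmax; destruct Rle_dec; auto. Qed.
Lemma Rmax_ge_l x y : x <= Rmax x y.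
Proof. apply Rmax_l. Qed.
Lemma Rmax_ge_r x y : y <= Rmax x y.
Proof. apply Rmax_r. Qed.
Lemma Rmax_lt x y z : x < z -> y < z -> Rmax x y < z.
Proof. unfold Rmax; destruct Rle_dec; auto. Qed.

Definition mev d o t0 t1 := if Z.ltb (NN d o t0) (NN d o t1) then TT d o (NN d o t1) else t0.

Lemma mev_props d o t0 t1 : 0 < d -> t0 <= t1 ->
  t0 <= mev d o t0 t1 <= t1 /\
  ((NN d o t0 < NN d o t1)%Z -> t0 < mev d o t0 t1 /\ mev d o t0 t1 = TT d o (NN d o t1)) /\
  (~ (NN d o t0 < NN d o t1)%Z -> mev d o t0 t1 = t0).
Proof.
  intros hd h01. unfold mev. destruct (Z.ltb_spec (NN d o t0) (NN d o t1)) as [L|L].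
  - assert (A := TT_gt d o hd t0 _ L). assert (B := TT_NN_le d o hd t1).
    split; [lra|split]. intros; split; auto. intros H; exfalso; auto.
  - split; [lra|split]. intros; lia. auto.
Qed.

Lemma form_last d o t0 t1 m : 0 < d -> t0 <= m -> m <= t1 ->
  ((NN d o t0 < NN d o t1)%Z -> TT d o (NN d o t1) <= m) -> NN d o m = NN d o t1.
Proof.
  intros hd a b H. assert (X := NN_mono d o hd _ _ b). assert (Y := NN_mono d o hd _ _ a).
  destruct (Z.lt_ge_cases (NN d o t0) (NN d o t1)) as [L|L].
  - specialize (H L). assert (Z := NN_ge d o hd _ _ H). lia.
  - assert (Z := NN_mono d o hd _ _ (Rle_trans _ _ _ a b)). lia.
Qed.

Lemma form_jump d o m (J : R -> R) : 0 < d ->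
  (MM d o m = NN d o m -> J m = 0) ->
  SZ (MM d o m) (NN d o m) (fun k => J (TT d o k)) = J m.
Proof.
  intros hd H. destruct (MM_cases d o hd m) as [A|[A B]].
  - rewrite A, SZ_nil. symmetry; auto.
  - rewrite A, SZ_one, B. auto.
Qed.

Section Sweep.
Variables d1 o1 d2 o2 d3 o3 : R.
Hypotheses (h1 : 0 < d1) (h2 : 0 < d2) (h3 : 0 < d3).
Variable G : Z -> Z -> Z -> R.

Definition Gat t := G (NN d1 o1 t) (NN d2 o2 t) (NN d3 o3 t).
Definition J3 t := G (NN d1 o1 t) (NN d2 o2 t) (NN d3 o3 t) - G (NN d1 o1 t) (NN d2 o2 t) (MM d3 o3 t).
Definition J2 t := G (NN d1 o1 t) (NN d2 o2 t) (MM d3 o3 t) - G (NN d1 o1 t) (MM d2 o2 t) (MM d3 o3 t).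
Definition J1 t := G (NN d1 o1 t) (MM d2 o2 t) (MM d3 o3 t) - G (MM d1 o1 t) (MM d2 o2 t) (MM d3 o3 t).
Definition RHSs t0 t1 :=
  SZ (NN d1 o1 t0) (NN d1 o1 t1) (fun k => J1 (TT d1 o1 k)) +
  SZ (NN d2 o2 t0) (NN d2 o2 t1) (fun k => J2 (TT d2 o2 k)) +
  SZ (NN d3 o3 t0) (NN d3 o3 t1) (fun k => J3 (TT d3 o3 k)).
Definition meas t0 t1 :=
  (Z.to_nat (NN d1 o1 t1 - NN d1 o1 t0) + Z.to_nat (NN d2 o2 t1 - NN d2 o2 t0)
   + Z.to_nat (NN d3 o3 t1 - NN d3 o3 t0))%nat.

Lemma sweep K : forall t0 t1, t0 <= t1 -> (meas t0 t1 <= K)%nat -> Gat t1 - Gat t0 = RHSs t0 t1.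
Proof.
  induction K as [|K IH]; intros t0 t1 h01 hK;
  (assert (M1 := NN_mono d1 o1 h1 _ _ h01); assert (M2 := NN_mono d2 o2 h2 _ _ h01);
   assert (M3 := NN_mono d3 o3 h3 _ _ h01));
  (destruct (Z.eq_dec (NN d1 o1 t0) (NN d1 o1 t1)) as [E1|E1];
   [destruct (Z.eq_dec (NN d2 o2 t0) (NN d2 o2 t1)) as [E2|E2];
    [destruct (Z.eq_dec (NN d3 o3 t0) (NN d3 o3 t1)) as [E3|E3]|]|]);
  try (unfold Gat, RHSs; rewrite <- E1, <- E2, <- E3, !SZ_nil; ring);
  try (unfold meas in hK; lia).
  all: set (m := Rmax (mev d1 o1 t0 t1) (Rmax (mev d2 o2 t0 t1) (mev d3 o3 t0 t1))).
  all: destruct (mev_props d1 o1 t0 t1 h1 h01) as [P1a [P1b P1c]].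
  all: destruct (mev_props d2 o2 t0 t1 h2 h01) as [P2a [P2b P2c]].
  all: destruct (mev_props d3 o3 t0 t1 h3 h01) as [P3a [P3b P3c]].
  all: assert (Hm0 : t0 <= m) by (unfold m; eapply Rle_trans; [apply P1a|apply Rmax_ge_l]).
  all: assert (Hm1 : m <= t1) by (unfold m; apply Rmax_lub; [lra|apply Rmax_lub; lra]).
  all: assert (Hm1' : mev d1 o1 t0 t1 <= m) by (unfold m; apply Rmax_ge_l).
  all: assert (Hm2' : mev d2 o2 t0 t1 <= m) by (unfold m; eapply Rle_trans; [apply Rmax_ge_l|apply Rmax_ge_r]).
  all: assert (Hm3' : mev d3 o3 t0 t1 <= m) by (unfold m; eapply Rle_trans; [apply Rmax_ge_r|apply Rmax_ge_r]).
  all: assert (Nm1 : NN d1 o1 m = NN d1 o1 t1)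
         by (apply (form_last d1 o1 t0 t1 m h1 Hm0 Hm1); intros L; destruct (P1b L) as [_ X]; lra).
  all: assert (Nm2 : NN d2 o2 m = NN d2 o2 t1)
         by (apply (form_last d2 o2 t0 t1 m h2 Hm0 Hm1); intros L; destruct (P2b L) as [_ X]; lra).
  all: assert (Nm3 : NN d3 o3 m = NN d3 o3 t1)
         by (apply (form_last d3 o3 t0 t1 m h3 Hm0 Hm1); intros L; destruct (P3b L) as [_ X]; lra).
  all: assert (Hmt0 : t0 < m).
  all: try (assert (L : (NN d1 o1 t0 < NN d1 o1 t1)%Z) by lia; destruct (P1b L); lra).
  all: try (assert (L : (NN d2 o2 t0 < NN d2 o2 t1)%Z) by lia; destruct (P2b L); lra).
  all: try (assert (L : (NN d3 o3 t0 < NN d3 o3 t1)%Z) by lia; destruct (P3b L); lra).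
  all: set (t' := Rmax t0 (Rmax (TT d1 o1 (MM d1 o1 m)) (Rmax (TT d2 o2 (MM d2 o2 m)) (TT d3 o3 (MM d3 o3 m))))).
  all: assert (Ht'0 : t0 <= t') by (unfold t'; apply Rmax_ge_l).
  all: assert (Ht'm : t' < m) by (unfold t'; repeat apply Rmax_lt; auto; apply TT_MM_lt; auto).
  all: assert (B1 : NN d1 o1 t' = MM d1 o1 m) by (apply NN_between; auto; unfold t';
          eapply Rle_trans; [|apply Rmax_ge_r]; apply Rmax_ge_l).
  all: assert (B2 : NN d2 o2 t' = MM d2 o2 m) by (apply NN_between; auto; unfold t';
          eapply Rle_trans; [|apply Rmax_ge_r]; eapply Rle_trans; [|apply Rmax_ge_r]; apply Rmax_ge_l).
  all: assert (B3 : NN d3 o3 t' = MM d3 o3 m) by (apply NN_between; auto; unfold t';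
          eapply Rle_trans; [|apply Rmax_ge_r]; eapply Rle_trans; [|apply Rmax_ge_r]; apply Rmax_ge_r).
  all: assert (C1 := NN_mono d1 o1 h1 _ _ Ht'0).
  all: assert (C2 := NN_mono d2 o2 h2 _ _ Ht'0).
  all: assert (C3 := NN_mono d3 o3 h3 _ _ Ht'0).
  all: assert (D1 := MM_le_NN d1 o1 h1 m).
  all: assert (D2 := MM_le_NN d2 o2 h2 m).
  all: assert (D3 := MM_le_NN d3 o3 h3 m).
  all: assert (Str : (MM d1 o1 m < NN d1 o1 m \/ MM d2 o2 m < NN d2 o2 m \/ MM d3 o3 m < NN d3 o3 m)%Z).
  all: try (
    let solve1 d o P Pb Pc h :=
      (destruct (Z.lt_ge_cases (NN d o t0) (NN d o t1)) as [L|L];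
       [destruct (Pb L) as [_ X]; rewrite X; rewrite MM_TT by auto; rewrite NN_TT by auto; lia
       |assert (~ (NN d o t0 < NN d o t1)%Z) as L' by lia; specialize (Pc L'); lra]) in
    unfold m in *;
    destruct (Rmax_or (mev d1 o1 t0 t1) (Rmax (mev d2 o2 t0 t1) (mev d3 o3 t0 t1))) as [R|R]; rewrite R in *;
    [ left; solve1 d1 o1 P1a P1b P1c h1
    | destruct (Rmax_or (mev d2 o2 t0 t1) (mev d3 o3 t0 t1)) as [R'|R']; rewrite R' in *;
      [ right; left; solve1 d2 o2 P2a P2b P2c h2 | right; right; solve1 d3 o3 P3a P3b P3c h3]]).
  all: assert (IHt := IH t0 t' Ht'0 ltac:(unfold meas in *; lia)).
  all: unfold RHSs in *.
  all: rewrite (SZ_split (NN d1 o1 t0) (NN d1 o1 t') (NN d1 o1 t1)) by lia.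
  all: rewrite (SZ_split (NN d2 o2 t0) (NN d2 o2 t') (NN d2 o2 t1)) by lia.
  all: rewrite (SZ_split (NN d3 o3 t0) (NN d3 o3 t') (NN d3 o3 t1)) by lia.
  all: rewrite B1, B2, B3, <- Nm1, <- Nm2, <- Nm3.
  all: rewrite (form_jump d1 o1 m J1 h1) by (unfold J1; intros X; rewrite X; ring).
  all: rewrite (form_jump d2 o2 m J2 h2) by (unfold J2; intros X; rewrite X; ring).
  all: rewrite (form_jump d3 o3 m J3 h3) by (unfold J3; intros X; rewrite X; ring).
  all: rewrite B1, B2, B3 in IHt.
  all: unfold Gat in *; rewrite <- Nm1, <- Nm2, <- Nm3; rewrite B1, B2, B3 in IHt.
  all: assert (Js : J1 m + J2 m + J3 m = G (NN d1 o1 m) (NN d2 o2 m) (NN d3 o3 m) - G (MM d1 o1 m) (MM d2 o2 m) (MM d3 o3 m)) by (unfold J1, J2, J3; ring).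
  all: lra.
Qed.

End Sweep.

Lemma INR_IZR n : INR n = IZR (Z.of_nat n).
Proof. apply INR_IZR_INZ. Qed.

Lemma NN_shift1 (n : nat) o t : NN (INR n) o (t + 1) = (NN (INR n) o t + Z.of_nat n)%Z.
Proof. unfold NN. replace (INR n * (t + 1) + o) with (INR n * t + o + IZR (Z.of_nat n)) by (rewrite <- INR_IZR; ring).
  apply fl_shift. Qed.
Lemma MM_shift1 (n : nat) o t : MM (INR n) o (t + 1) = (MM (INR n) o t + Z.of_nat n)%Z.
Proof. unfold MM. replace (INR n * (t + 1) + o) with (INR n * t + o + IZR (Z.of_nat n)) by (rewrite <- INR_IZR; ring).
  apply lf_shift. Qed.
Lemma TT_shift (n : nat) o k : (0 < n)%nat -> TT (INR n) o (k + Z.of_nat n) = TT (INR n) o k + 1.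
Proof. intros H. unfold TT. rewrite plus_IZR, <- INR_IZR. field. apply not_0_INR; lia. Qed.

Lemma SZ_window_fwd (P : nat) f : SZ (-1) (-1 + Z.of_nat P) f = sumn (fun mu => f (Z.of_nat mu)) P.
Proof. unfold SZ. replace (-1 + Z.of_nat P - -1)%Z with (Z.of_nat P) by lia. rewrite Nat2Z.id.
  apply sumn_ext; intros; f_equal; lia. Qed.

Lemma SZ_window_bwd (P : nat) f : SZ (- Z.of_nat P) (- Z.of_nat P + Z.of_nat P) f = sumn (fun mu => f (- Z.of_nat mu)%Z) P.
Proof. unfold SZ. replace (- Z.of_nat P + Z.of_nat P - - Z.of_nat P)%Z with (Z.of_nat P) by lia. rewrite Nat2Z.id.
  rewrite sumn_rev. apply sumn_ext; intros; f_equal; lia. Qed.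

Lemma period_sweep (na nb nc : nat) o1 o2 o3 (G : Z -> Z -> Z -> R) :
  (0 < na)%nat -> (0 < nb)%nat -> (0 < nc)%nat ->
  (forall n1 n2 n3, G (n1 + Z.of_nat na)%Z (n2 + Z.of_nat nb)%Z (n3 + Z.of_nat nc)%Z = G n1 n2 n3) ->
  sumn (fun mu => J1 (INR na) o1 (INR nb) o2 (INR nc) o3 G (TT (INR na) o1 (- Z.of_nat mu))) na +
  sumn (fun mu => J2 (INR na) o1 (INR nb) o2 (INR nc) o3 G (TT (INR nb) o2 (- Z.of_nat mu))) nb +
  sumn (fun mu => J3 (INR na) o1 (INR nb) o2 (INR nc) o3 G (TT (INR nc) o3 (Z.of_nat mu))) nc = 0.
Proof.
  intros ha hb hc HG.
  assert (ra : 0 < INR na) by (apply lt_0_INR; lia).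
  assert (rb : 0 < INR nb) by (apply lt_0_INR; lia).
  assert (rc : 0 < INR nc) by (apply lt_0_INR; lia).
  assert (S := sweep (INR na) o1 (INR nb) o2 (INR nc) o3 ra rb rc G _ 0 1 ltac:(lra) (le_n _)).
  unfold Gat, RHSs in S.
  replace 1 with (0 + 1) in S by ring.
  rewrite !NN_shift1, HG in S.
  assert (PJ1 : forall t, J1 (INR na) o1 (INR nb) o2 (INR nc) o3 G (t + 1) = J1 (INR na) o1 (INR nb) o2 (INR nc) o3 G t).
  { intros t; unfold J1. rewrite !NN_shift1, !MM_shift1, !HG. auto. }
  assert (PJ2 : forall t, J2 (INR na) o1 (INR nb) o2 (INR nc) o3 G (t + 1) = J2 (INR na) o1 (INR nb) o2 (INR nc) o3 G t).
  { intros t; unfold J2. rewrite !NN_shift1, !MM_shift1, !HG. auto. }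
  assert (PJ3 : forall t, J3 (INR na) o1 (INR nb) o2 (INR nc) o3 G (t + 1) = J3 (INR na) o1 (INR nb) o2 (INR nc) o3 G t).
  { intros t; unfold J3. rewrite !NN_shift1, !MM_shift1, !HG. auto. }
  rewrite (SZ_period na _ _ (- Z.of_nat na)) in S by (intros k; rewrite TT_shift by auto; auto).
  rewrite (SZ_period nb _ _ (- Z.of_nat nb)) in S by (intros k; rewrite TT_shift by auto; auto).
  rewrite (SZ_period nc _ _ (-1)) in S by (intros k; rewrite TT_shift by auto; auto).
  rewrite !SZ_window_bwd, SZ_window_fwd in S. lra.
Qed.

Definition rho (s : R) (n : Z) := sgnZ n * exp (- IZR n * s).

Lemma sgnZ_add m n : sgnZ (m + n) = sgnZ m * sgnZ n.
Proof. unfold sgnZ. rewrite Z.even_add. destruct (Z.even m), (Z.even n); simpl; ring. Qed.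
Lemma sgnZ_opp n : sgnZ (- n) = sgnZ n.
Proof. unfold sgnZ. rewrite Z.even_opp. auto. Qed.
Lemma sgnZ_m1 n : sgnZ (n - 1) = - sgnZ n.
Proof. replace (n - 1)%Z with (n + (-1))%Z by lia. rewrite sgnZ_add. replace (sgnZ (-1)) with (-1) by reflexivity. ring. Qed.
Lemma sgnZ_nat n : sgnZ (Z.of_nat n) = (-1) ^ n.
Proof.
  induction n as [|n IH]. reflexivity.
  rewrite Nat2Z.inj_succ, <- Z.add_1_r, sgnZ_add, IH. replace (sgnZ 1) with (-1) by reflexivity. simpl. ring.
Qed.
Lemma sgnZ_sq n : sgnZ n * sgnZ n = 1.
Proof. unfold sgnZ; destruct (Z.even n); ring. Qed.

Lemma rho_add s m n : rho s (m + n) = rho s m * rho s n.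
Proof. unfold rho. rewrite sgnZ_add, plus_IZR, <- (Rmult_comm (sgnZ n)).
  replace (- (IZR m + IZR n) * s) with (- IZR m * s + - IZR n * s) by ring. rewrite exp_plus. ring. Qed.

Lemma rho_nat_neg s mu : rho s (- Z.of_nat mu) = (-1) ^ mu * exp (INR mu * s).
Proof. unfold rho. rewrite sgnZ_opp, sgnZ_nat, opp_IZR, <- INR_IZR. f_equal. f_equal. ring. Qed.

Lemma rho_nat_neg1 s mu : rho s (- Z.of_nat mu - 1) = - (-1) ^ mu * exp (INR mu * s) * exp s.
Proof. unfold rho. rewrite sgnZ_m1, sgnZ_opp, sgnZ_nat, minus_IZR, opp_IZR, <- INR_IZR.
  replace (- (- INR mu - 1) * s) with (INR mu * s + s) by ring. rewrite exp_plus. ring. Qed.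

Lemma eg_rho U s : eg U s * (exp s + 1) = 2 * exp (U * s) * rho s (Int_part U).
Proof.
  unfold eg, hh, fr, rho.
  replace ((U - IZR (Int_part U)) * s) with (U * s + - IZR (Int_part U) * s) by ring.
  rewrite exp_plus. field. generalize (exp_pos s); lra.
Qed.

Lemma IP_opp_lf u : Int_part (- u) = (- lf u - 1)%Z.
Proof. unfold lf. lia. Qed.

Lemma eg_rho_neg u s : eg (- u) (- s) * (exp s + 1) = - 2 * exp (u * s) * rho s (lf u).
Proof.
  assert (E := eg_rho (- u) (- s)). rewrite IP_opp_lf in E.
  unfold rho in *. rewrite sgnZ_m1, sgnZ_opp in E.
  rewrite minus_IZR, opp_IZR in E.
  replace (- (- IZR (lf u) - 1) * - s) with (- IZR (lf u) * s + - s) in E by ring.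
  replace (- u * - s) with (u * s) in E by ring.
  rewrite exp_plus in E.
  assert (K : exp (- s) + 1 = (exp s + 1) * exp (- s)).
  { rewrite Rmult_plus_distr_r, <- exp_plus. replace (s + - s) with 0 by ring. rewrite exp_0. ring. }
  rewrite K in E.
  assert (Hs : exp (- s) <> 0) by (generalize (exp_pos (- s)); lra).
  apply (Rmult_eq_reg_r (exp (- s))); auto.
  rewrite Rmult_assoc, E. ring.
Qed.

Lemma exp_neq0 u : exp u <> 0.
Proof. generalize (exp_pos u); lra. Qed.

Section Core.
Variables (na nb nc : nat) (x y z al be ga : R).
Hypotheses (ha : (0 < na)%nat) (hb : (0 < nb)%nat) (hc : (0 < nc)%nat).
Hypothesis Hrel : INR na * al + INR nb * be = INR nc * ga.

Let ra : 0 < INR na. Proof. apply lt_0_INR; lia. Qed.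
Let rb : 0 < INR nb. Proof. apply lt_0_INR; lia. Qed.
Let rc : 0 < INR nc. Proof. apply lt_0_INR; lia. Qed.

Definition Gc (n1 n2 n3 : Z) := rho al n1 * rho be n2 * rho ga (- n3 - 1).
Definition Ec := x * al + y * be + z * ga.
Definition KK := (exp al + 1) * (exp be + 1) * (exp ga + 1).

Lemma J3_val mu :
  J3 (INR na) x (INR nb) y (INR nc) (- z) Gc (TT (INR nc) (- z) (Z.of_nat mu)) * (4 * exp Ec)
  = - ((-1) ^ mu * eg (INR na * ((INR mu + z) / INR nc) + x) al
                 * eg (INR nb * ((INR mu + z) / INR nc) + y) be) * KK.
Proof.
  set (t := TT (INR nc) (- z) (Z.of_nat mu)).
  assert (Ht : t = (INR mu + z) / INR nc) by (unfold t, TT; rewrite <- INR_IZR; field; lra).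
  unfold J3. unfold t at 3 6. rewrite (NN_TT _ _ rc), (MM_TT _ _ rc).
  unfold NN. rewrite Ht.
  set (U1 := INR na * ((INR mu + z) / INR nc) + x).
  set (U2 := INR nb * ((INR mu + z) / INR nc) + y).
  unfold Gc. replace (- (Z.of_nat mu - 1) - 1)%Z with (- Z.of_nat mu)%Z by lia.
  rewrite rho_nat_neg, rho_nat_neg1.
  replace (- ((-1) ^ mu * eg U1 al * eg U2 be) * KK) with
     (- (-1) ^ mu * (eg U1 al * (exp al + 1)) * (eg U2 be * (exp be + 1)) * (exp ga + 1)) by (unfold KK; ring).
  rewrite !eg_rho.
  assert (X : exp (U1 * al) * exp (U2 * be) = exp (INR mu * ga) * exp Ec).
  { rewrite <- !exp_plus. f_equal. unfold U1, U2, Ec.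
    set (w := (INR mu + z) / INR nc).
    assert (E1 : w * (INR na * al + INR nb * be) = w * (INR nc * ga)) by (rewrite Hrel; auto).
    assert (E2 : w * INR nc = INR mu + z) by (unfold w; field; lra).
    assert (E3 : (w * INR nc) * ga = (INR mu + z) * ga) by (rewrite E2; auto).
    lra. }
  replace (exp (U1 * al)) with (exp (INR mu * ga) * exp Ec / exp (U2 * be)) by (rewrite <- X; field; apply exp_neq0).
  field. apply exp_neq0.
Qed.

Lemma J2_val mu :
  J2 (INR na) x (INR nb) y (INR nc) (- z) Gc (TT (INR nb) y (- Z.of_nat mu)) * (4 * exp Ec)
  = ((-1) ^ mu * eg (INR nc * ((INR mu + y) / INR nb) + z) ga
               * eg (- INR na * ((INR mu + y) / INR nb) + x) al) * KK.
Proof.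
  set (t := TT (INR nb) y (- Z.of_nat mu)).
  set (v := (INR mu + y) / INR nb).
  assert (Ht : t = - v) by (unfold t, v, TT; rewrite opp_IZR, <- INR_IZR; field; lra).
  unfold J2. unfold t at 2 5. rewrite (NN_TT _ _ rb), (MM_TT _ _ rb).
  unfold NN, MM. rewrite Ht.
  set (U1 := - INR na * v + x).
  set (U3 := INR nc * v + z).
  replace (INR na * - v + x) with U1 by (unfold U1; ring).
  assert (E3 : Int_part U3 = (- lf (INR nc * - v + - z) - 1)%Z).
  { rewrite <- IP_opp_lf. f_equal. unfold U3; ring. }
  unfold Gc. rewrite <- E3.
  replace (- Z.of_nat mu - 1)%Z with (- Z.of_nat mu - 1)%Z by lia.
  rewrite rho_nat_neg, rho_nat_neg1.
  replace (((-1) ^ mu * eg U3 ga * eg U1 al) * KK) with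
     ((-1) ^ mu * (eg U3 ga * (exp ga + 1)) * (eg U1 al * (exp al + 1)) * (exp be + 1)) by (unfold KK; ring).
  rewrite !eg_rho.
  assert (X : exp (U3 * ga) * exp (U1 * al) = exp (INR mu * be) * exp Ec).
  { rewrite <- !exp_plus. f_equal. unfold U1, U3, Ec.
    assert (E1 : v * (INR na * al + INR nb * be) = v * (INR nc * ga)) by (rewrite Hrel; auto).
    assert (E2 : v * INR nb = INR mu + y) by (unfold v; field; lra).
    assert (E4 : (v * INR nb) * be = (INR mu + y) * be) by (rewrite E2; auto).
    lra. }
  replace (exp (U3 * ga)) with (exp (INR mu * be) * exp Ec / exp (U1 * al)) by (rewrite <- X; field; apply exp_neq0).
  field. apply exp_neq0.
Qed.

Lemma J1_val mu :
  J1 (INR na) x (INR nb) y (INR nc) (- z) Gc (TT (INR na) x (- Z.of_nat mu)) * (4 * exp Ec)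
  = - ((-1) ^ mu * eg (INR nc * ((INR mu + x) / INR na) + z) ga
                 * eg (INR nb * ((INR mu + x) / INR na) + - y) (- be)) * KK.
Proof.
  set (t := TT (INR na) x (- Z.of_nat mu)).
  set (w := (INR mu + x) / INR na).
  assert (Ht : t = - w) by (unfold t, w, TT; rewrite opp_IZR, <- INR_IZR; field; lra).
  unfold J1. unfold t at 1 4. rewrite (NN_TT _ _ ra), (MM_TT _ _ ra).
  unfold MM. rewrite Ht.
  set (U3 := INR nc * w + z).
  set (L2 := INR nb * - w + y).
  replace (INR nb * w + - y) with (- L2) by (unfold L2; ring).
  assert (E3 : Int_part U3 = (- lf (INR nc * - w + - z) - 1)%Z).
  { rewrite <- IP_opp_lf. f_equal. unfold U3; ring. }
  unfold Gc. rewrite <- E3.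
  rewrite rho_nat_neg, rho_nat_neg1.
  replace (- ((-1) ^ mu * eg U3 ga * eg (- L2) (- be)) * KK) with
     (- (-1) ^ mu * (eg U3 ga * (exp ga + 1)) * (eg (- L2) (- be) * (exp be + 1)) * (exp al + 1)) by (unfold KK; ring).
  rewrite eg_rho, eg_rho_neg.
  assert (X : exp (U3 * ga) * exp (L2 * be) = exp (INR mu * al) * exp Ec).
  { rewrite <- !exp_plus. f_equal. unfold L2, U3, Ec.
    assert (E1 : w * (INR na * al + INR nb * be) = w * (INR nc * ga)) by (rewrite Hrel; auto).
    assert (E2 : w * INR na = INR mu + x) by (unfold w; field; lra).
    assert (E4 : (w * INR na) * al = (INR mu + x) * al) by (rewrite E2; auto).
    lra. }
  replace (exp (U3 * ga)) with (exp (INR mu * al) * exp Ec / exp (L2 * be)) by (rewrite <- X; field; apply exp_neq0).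
  field. apply exp_neq0.
Qed.

End Core.

Lemma sumn_mult_r f k n : sumn f n * k = sumn (fun i => f i * k) n.
Proof. induction n as [|n IH]; simpl. ring. rewrite <- IH; ring. Qed.

Lemma core (na nb nc : nat) x y z al be ga :
  (0 < na)%nat -> (0 < nb)%nat -> (0 < nc)%nat -> Nat.even (na + nb + nc) = true ->
  INR na * al + INR nb * be = INR nc * ga ->
  sumn (fun mu => (-1) ^ mu * eg (INR na * ((INR mu + z) / INR nc) + x) al
                            * eg (INR nb * ((INR mu + z) / INR nc) + y) be) nc
  = sumn (fun mu => (-1) ^ mu * eg (INR nc * ((INR mu + y) / INR nb) + z) ga
                            * eg (- INR na * ((INR mu + y) / INR nb) + x) al) nb
  - sumn (fun mu => (-1) ^ mu * eg (INR nc * ((INR mu + x) / INR na) + z) ga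
                            * eg (INR nb * ((INR mu + x) / INR na) + - y) (- be)) na.
Proof.
  intros ha hb hc hev Hrel.
  assert (HG : forall n1 n2 n3, Gc al be ga (n1 + Z.of_nat na)%Z (n2 + Z.of_nat nb)%Z (n3 + Z.of_nat nc)%Z
                              = Gc al be ga n1 n2 n3).
  { intros n1 n2 n3. unfold Gc.
    replace (- (n3 + Z.of_nat nc) - 1)%Z with ((- n3 - 1) + - Z.of_nat nc)%Z by lia.
    rewrite !rho_add.
    assert (P : rho al (Z.of_nat na) * rho be (Z.of_nat nb) * rho ga (- Z.of_nat nc) = 1).
    { rewrite rho_nat_neg. unfold rho. rewrite !sgnZ_nat, <- !INR_IZR.
      replace ((-1) ^ na * exp (- INR na * al) * ((-1) ^ nb * exp (- INR nb * be)) * ((-1) ^ nc * exp (INR nc * ga)))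
        with (((-1) ^ (na + nb + nc)) * (exp (- INR na * al) * exp (- INR nb * be) * exp (INR nc * ga)))
        by (rewrite !pow_add; ring).
      rewrite <- !exp_plus.
      replace (- INR na * al + - INR nb * be + INR nc * ga) with 0 by lra. rewrite exp_0.
      destruct (Nat.Even_or_Odd (na + nb + nc)) as [[k Hk]|[k Hk]].
      - rewrite Hk, pow_mult. replace ((-1) ^ 2) with 1 by ring. rewrite pow1. ring.
      - exfalso. rewrite Hk, Nat.add_comm, Nat.even_add_mul_2 in hev. discriminate. }
    transitivity (rho al n1 * rho be n2 * rho ga (- n3 - 1) *
                  (rho al (Z.of_nat na) * rho be (Z.of_nat nb) * rho ga (- Z.of_nat nc))); [ring|].
    rewrite P. ring. }
  assert (S := period_sweep na nb nc x y (- z) _ ha hb hc HG).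
  assert (S' : (sumn (fun mu => J1 (INR na) x (INR nb) y (INR nc) (- z) (Gc al be ga) (TT (INR na) x (- Z.of_nat mu))) na +
   sumn (fun mu => J2 (INR na) x (INR nb) y (INR nc) (- z) (Gc al be ga) (TT (INR nb) y (- Z.of_nat mu))) nb +
   sumn (fun mu => J3 (INR na) x (INR nb) y (INR nc) (- z) (Gc al be ga) (TT (INR nc) (- z) (Z.of_nat mu))) nc)
     * (4 * exp (Ec x y z al be ga)) = 0) by (rewrite S; ring).
  rewrite !Rmult_plus_distr_r, !sumn_mult_r in S'.
  rewrite (sumn_ext _ _ na (fun i _ => J1_val na nb nc x y z al be ga ha hb hc Hrel i)) in S'.
  rewrite (sumn_ext _ _ nb (fun i _ => J2_val na nb nc x y z al be ga ha hb hc Hrel i)) in S'.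
  rewrite (sumn_ext _ _ nc (fun i _ => J3_val na nb nc x y z al be ga ha hb hc Hrel i)) in S'.
  rewrite <- !sumn_mult_r in S'.
  assert (KKp : 0 < KK al be ga).
  { unfold KK. generalize (exp_pos al) (exp_pos be) (exp_pos ga); intros.
    apply Rmult_lt_0_compat; [apply Rmult_lt_0_compat|]; lra. }
  assert (Q : forall f n, sumn (fun i => - f i) n = - sumn f n).
  { intros f n; induction n as [|n IH]; simpl. ring. rewrite IH; ring. }
  rewrite !Q in S'.
  apply (Rmult_eq_reg_r (KK al be ga)); [|lra].
  lra.
Qed.

Lemma HD_sumn (f : nat -> R -> R) F N :
  (forall i, HD (f i) (F i)) ->
  HD (fun x => sumn (fun i => f i x) N) (fun n x => sumn (fun i => F i n x) N).
Proof.
  intros H. induction N as [|N IH]; simpl.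
  - apply (HD_ext2 _ (fun n _ => match n with O => 0 | _ => 0 end)). intros [|n] _; auto. apply HD_const.
  - apply HD_plus; auto.
Qed.

Lemma HD_minus f g F G : HD f F -> HD g G -> HD (fun x => f x - g x) (fun n x => F n x - G n x).
Proof.
  intros A B. apply (HD_ext (fun x => f x + (-1) * g x)). intros; ring.
  apply (HD_ext2 _ (fun n x => F n x + (-1) * G n x)). intros; ring.
  apply HD_plus; auto. apply HD_scal; auto.
Qed.

Definition OpHD P Q (H : R -> R -> R) v :=
  exists Fi Fo, (forall s, HD (fun t => H s t) (Fi s)) /\ HD (fun s => Fi s Q 0) Fo /\ Fo P 0 = v.

Lemma OpHD_Op P Q H v : OpHD P Q H v -> Op P Q H = v.
Proof. intros (Fi & Fo & A & B & C). rewrite (Op_HD P Q H Fi Fo A B). auto. Qed.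

Lemma OpHD_minus P Q H1 H2 v1 v2 : OpHD P Q H1 v1 -> OpHD P Q H2 v2 ->
  OpHD P Q (fun s t => H1 s t - H2 s t) (v1 - v2).
Proof.
  intros (Fi & Fo & A & B & C) (Gi & Go & A' & B' & C').
  exists (fun s n t => Fi s n t - Gi s n t), (fun n s => Fo n s - Go n s).
  split; [|split].
  - intros s. apply HD_minus; auto.
  - apply HD_minus; auto.
  - rewrite C, C'. auto.
Qed.

Lemma OpHD_ext P Q H1 H2 v : (forall s t, H1 s t = H2 s t) -> OpHD P Q H1 v -> OpHD P Q H2 v.
Proof.
  intros E (Fi & Fo & A & B & C). exists Fi, Fo. split; [|split]; auto.
  intros s. apply (HD_ext (fun t => H1 s t)); auto.
Qed.

Lemma HD_eg_lin u k b : HD (fun s => eg u (k * s + b)) (fun n s => k ^ n * EG u n (k * s + b)).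
Proof. apply (HD_lin (eg u) (EG u)), HD_eg. Qed.

Lemma EG0 u n : EG u n 0 = euler_fun n u.
Proof. symmetry; apply euler_fun_eg. Qed.

Lemma Op_T1 N (w A B : nat -> R) ka kb P Q :
  OpHD P Q (fun s t => sumn (fun mu => w mu * eg (A mu) (ka * s) * eg (B mu) (kb * t)) N)
    (sumn (fun mu => w mu * (ka ^ P * euler_fun P (A mu)) * (kb ^ Q * euler_fun Q (B mu))) N).
Proof.
  exists (fun s n t => sumn (fun mu => (w mu * eg (A mu) (ka * s)) * (kb ^ n * EG (B mu) n (kb * t + 0))) N).
  exists (fun n s => sumn (fun mu => (w mu * (kb ^ Q * EG (B mu) Q (kb * 0 + 0))) * (ka ^ n * EG (A mu) n (ka * s + 0))) N).
  split; [|split].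
  - intros s. apply (HD_ext (fun t => sumn (fun mu => (w mu * eg (A mu) (ka * s)) * eg (B mu) (kb * t + 0)) N)).
    { intros t. cbv beta. apply sumn_ext; intros. rewrite !Rplus_0_r. ring. }
    apply HD_sumn. intros i. apply HD_scal. apply HD_eg_lin.
  - apply (HD_ext (fun s => sumn (fun mu => (w mu * (kb ^ Q * EG (B mu) Q (kb * 0 + 0))) * eg (A mu) (ka * s + 0)) N)).
    { intros s. cbv beta. apply sumn_ext; intros. rewrite !Rplus_0_r. ring. }
    apply HD_sumn. intros i. apply HD_scal. apply HD_eg_lin.
  - apply sumn_ext; intros. replace (kb * 0 + 0) with 0 by ring. replace (ka * 0 + 0) with 0 by ring.
    rewrite !EG0. ring.
Qed.

Lemma HD_EG_lin u m k b : HD (fun s => EG u m (k * s + b)) (fun n s => k ^ n * EG u (m + n) (k * s + b)).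
Proof. apply (HD_lin (EG u m) (fun n => EG u (m + n))). apply (HD_shift (eg u)), HD_eg. Qed.

Lemma Op_T2 N (w A C : nat -> R) ka kc P Q :
  OpHD P Q (fun s t => sumn (fun mu => w mu * eg (C mu) (kc * (s + t)) * eg (A mu) (ka * s)) N)
    (sumn (fun mu => w mu * sumn (fun k => binom P k * (kc ^ (Q + k) * euler_fun (Q + k) (C mu))
                                            * (ka ^ (P - k) * euler_fun (P - k) (A mu))) (S P)) N).
Proof.
  exists (fun s n t => sumn (fun mu => (w mu * eg (A mu) (ka * s)) * (kc ^ n * EG (C mu) n (kc * t + kc * s))) N).
  exists (fun n s => sumn (fun mu => (w mu * kc ^ Q) *
      Leib (fun n s => kc ^ n * EG (C mu) (Q + n) (kc * s + 0)) (fun n s => ka ^ n * EG (A mu) n (ka * s + 0)) n s) N).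
  split; [|split].
  - intros s. apply (HD_ext (fun t => sumn (fun mu => (w mu * eg (A mu) (ka * s)) * eg (C mu) (kc * t + kc * s)) N)).
    { intros t. cbv beta. apply sumn_ext; intros. replace (kc * t + kc * s) with (kc * (s + t)) by ring. ring. }
    apply HD_sumn. intros i. apply HD_scal. apply HD_eg_lin.
  - apply (HD_ext (fun s => sumn (fun mu => (w mu * kc ^ Q) * (EG (C mu) Q (kc * s + 0) * eg (A mu) (ka * s + 0))) N)).
    { intros s. cbv beta. apply sumn_ext; intros. rewrite !Rplus_0_r. replace (kc * 0 + kc * s) with (kc * s) by ring. ring. }
    apply HD_sumn. intros i. apply HD_scal. apply HD_mult. apply HD_EG_lin. apply HD_eg_lin.
  - apply sumn_ext; intros mu _. unfold Leib.
    rewrite Rmult_assoc. f_equal. rewrite <- sumn_scal. apply sumn_ext; intros k _.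
    replace (kc * 0 + 0) with 0 by ring. replace (ka * 0 + 0) with 0 by ring.
    rewrite !EG0, pow_add. ring.
Qed.

Lemma Op_T3 N (w B C : nat -> R) kb kc P Q :
  OpHD P Q (fun s t => sumn (fun mu => w mu * eg (C mu) (kc * (s + t)) * eg (B mu) (kb * t)) N)
    (sumn (fun mu => w mu * sumn (fun k => binom Q k * (kc ^ (k + P) * euler_fun (k + P) (C mu))
                                            * (kb ^ (Q - k) * euler_fun (Q - k) (B mu))) (S Q)) N).
Proof.
  exists (fun s n t => sumn (fun mu => w mu *
      Leib (fun n t => kc ^ n * EG (C mu) n (kc * t + kc * s)) (fun n t => kb ^ n * EG (B mu) n (kb * t + 0)) n t) N).
  exists (fun n s => sumn (fun mu => w mu * sumn (fun k =>
      (binom Q k * kc ^ k * (kb ^ (Q - k) * EG (B mu) (Q - k) (kb * 0 + 0))) *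
      (kc ^ n * EG (C mu) (k + n) (kc * s + 0))) (S Q)) N).
  split; [|split].
  - intros s. apply (HD_ext (fun t => sumn (fun mu => w mu * (eg (C mu) (kc * t + kc * s) * eg (B mu) (kb * t + 0))) N)).
    { intros t. cbv beta. apply sumn_ext; intros. rewrite !Rplus_0_r. replace (kc * t + kc * s) with (kc * (s + t)) by ring. ring. }
    apply HD_sumn. intros i. apply HD_scal. apply HD_mult; apply HD_eg_lin.
  - apply (HD_ext (fun s => sumn (fun mu => w mu * sumn (fun k =>
      (binom Q k * kc ^ k * (kb ^ (Q - k) * EG (B mu) (Q - k) (kb * 0 + 0))) * EG (C mu) k (kc * s + 0)) (S Q)) N)).
    { intros s. cbv beta. apply sumn_ext; intros mu _. unfold Leib. f_equal. apply sumn_ext; intros k _.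
      replace (kc * 0 + kc * s) with (kc * s + 0) by ring. ring. }
    apply HD_sumn. intros i. apply HD_scal. apply HD_sumn. intros k. apply HD_scal.
    apply HD_EG_lin.
  - apply sumn_ext; intros mu _. f_equal. apply sumn_ext; intros k _.
    replace (kc * 0 + 0) with 0 by ring. replace (kb * 0 + 0) with 0 by ring.
    rewrite !EG0, pow_add. ring.
Qed.

Lemma pw_neg x n : x <> 0 -> powerRZ x (- Z.of_nat n) = (/ x) ^ n.
Proof. intros H. rewrite powerRZ_neg', <- pow_powerRZ. rewrite pow_inv. auto. Qed.

Lemma Op_ext P Q H H' : (forall s t, H s t = H' s t) -> Op P Q H = Op P Q H'.
Proof. intros E. unfold Op. apply Derive_n_ext. intros s. apply Derive_n_ext. auto. Qed.

Lemma sum_f_R0_sumn_pred f n : (0 < n)%nat -> sum_f_R0 f (n - 1) = sumn f n.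
Proof. intros H. rewrite sumn_f_R0. f_equal. lia. Qed.

Lemma sumn_sum (f : nat -> nat -> R) P N :
  sumn (fun i => sumn (fun mu => f i mu) N) P = sumn (fun mu => sumn (fun i => f i mu) P) N.
Proof. apply sumn_swap. Qed.

Lemma sumn_opp f n : sumn (fun i => - f i) n = - sumn f n.
Proof. induction n as [|n IH]; simpl. ring. rewrite IH; ring. Qed.

Theorem theorem2 (a b c : Z)
  (ha : (0 < a)%Z) (hb : (0 < b)%Z) (hc : (0 < c)%Z)
  (hab : Z.gcd a b = 1%Z) (hbc : Z.gcd b c = 1%Z) (hac : Z.gcd a c = 1%Z)
  (heven : Z.even (a + b + c) = true)
  (p q : nat) (hp : (1 <= p)%nat) (hq : (1 <= q)%nat) (x y z : R) :
  powerRZ (IZR a) (1 - Z.of_nat p) * powerRZ (IZR b) (1 - Z.of_nat q)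
    * S_pq p q a b c x y z
  = sum_f 1 p (fun j =>
        Binomial.C (p - 1) (j - 1)
        * powerRZ (IZR a) (1 - Z.of_nat j)
        * powerRZ (IZR c) (1 + Z.of_nat j - Z.of_nat p - Z.of_nat q)
        * S_pq (p + q - j) j c (- a) b z x y)
    + sum_f 1 q (fun h =>
        Binomial.C (q - 1) (h - 1) * (-1) ^ h
        * powerRZ (IZR b) (1 - Z.of_nat h)
        * powerRZ (IZR c) (1 + Z.of_nat h - Z.of_nat p - Z.of_nat q)
        * S_pq (p + q - h) h c b a z (- y) x).
Proof.
  set (na := Z.to_nat a). set (nb := Z.to_nat b). set (nc := Z.to_nat c).
  assert (Ea : IZR a = INR na) by (unfold na; rewrite INR_IZR_INZ, Z2Nat.id; [reflexivity|lia]).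
  assert (Eb : IZR b = INR nb) by (unfold nb; rewrite INR_IZR_INZ, Z2Nat.id; [reflexivity|lia]).
  assert (Ec : IZR c = INR nc) by (unfold nc; rewrite INR_IZR_INZ, Z2Nat.id; [reflexivity|lia]).
  assert (na0 : (0 < na)%nat) by (unfold na; lia).
  assert (nb0 : (0 < nb)%nat) by (unfold nb; lia).
  assert (nc0 : (0 < nc)%nat) by (unfold nc; lia).
  assert (hev : Nat.even (na + nb + nc) = true).
  { destruct (Nat.Even_or_Odd (na + nb + nc)) as [He|[k Hk]].
    - apply Nat.even_spec; auto.
    - exfalso. replace (a + b + c)%Z with (1 + 2 * Z.of_nat k)%Z in heven by (unfold na, nb, nc in Hk; lia).
      rewrite Z.even_add_mul_2 in heven. discriminate. }
  assert (ra : IZR a <> 0) by (apply not_0_IZR; lia).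
  assert (rb : IZR b <> 0) by (apply not_0_IZR; lia).
  assert (rc : IZR c <> 0) by (apply not_0_IZR; lia).
  destruct p as [|P]; [lia|]. destruct q as [|Q]; [lia|].
  (* the generating-function identity, differentiated *)
  pose proof (OpHD_Op P Q _ _ (Op_T1 nc (fun mu => (-1) ^ mu)
      (fun mu => IZR a * ((INR mu + z) / IZR c) + x) (fun mu => IZR b * ((INR mu + z) / IZR c) + y)
      (/ IZR a) (/ IZR b) P Q)) as VL.
  pose proof (OpHD_Op P Q _ _ (OpHD_minus P Q _ _ _ _
      (Op_T2 nb (fun mu => (-1) ^ mu)
         (fun mu => IZR (- a) * ((INR mu + y) / IZR b) + x) (fun mu => IZR c * ((INR mu + y) / IZR b) + z)
         (/ IZR a) (/ IZR c) P Q)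
      (Op_T3 na (fun mu => (-1) ^ mu)
         (fun mu => IZR b * ((INR mu + x) / IZR a) + - y) (fun mu => IZR c * ((INR mu + x) / IZR a) + z)
         (- / IZR b) (/ IZR c) P Q))) as VR.
  assert (VLR : Op P Q (fun s t => sumn (fun mu => (-1) ^ mu * eg (IZR a * ((INR mu + z) / IZR c) + x) (/ IZR a * s)
                                                  * eg (IZR b * ((INR mu + z) / IZR c) + y) (/ IZR b * t)) nc)
              = Op P Q (fun s t =>
                  sumn (fun mu => (-1) ^ mu * eg (IZR c * ((INR mu + y) / IZR b) + z) (/ IZR c * (s + t))
                                  * eg (IZR (- a) * ((INR mu + y) / IZR b) + x) (/ IZR a * s)) nb
                - sumn (fun mu => (-1) ^ mu * eg (IZR c * ((INR mu + x) / IZR a) + z) (/ IZR c * (s + t))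
                                  * eg (IZR b * ((INR mu + x) / IZR a) + - y) (- / IZR b * t)) na)).
  { apply Op_ext. intros s t.
    assert (K := core na nb nc x y z (/ IZR a * s) (/ IZR b * t) (/ IZR c * (s + t)) na0 nb0 nc0 hev
                  ltac:(rewrite <- Ea, <- Eb, <- Ec; field; auto)).
    rewrite <- Ea, <- Eb, <- Ec in K. rewrite opp_IZR.
    replace (- / IZR b * t) with (- (/ IZR b * t)) by ring. exact K. }
  cbv beta in VL, VR. rewrite VL, VR in VLR. clear VL VR.
  match type of VLR with ?A = ?B => transitivity A; [|rewrite VLR; clear VLR] end.
  { replace (1 - Z.of_nat (S P))%Z with (- Z.of_nat P)%Z by lia.
    replace (1 - Z.of_nat (S Q))%Z with (- Z.of_nat Q)%Z by lia.
    rewrite !pw_neg by auto.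
    unfold S_pq. replace (S P - 1)%nat with P by lia. replace (S Q - 1)%nat with Q by lia.
    change (Z.to_nat c) with nc. rewrite sum_f_R0_sumn_pred by auto.
    rewrite <- (sumn_scal ((/ IZR a) ^ P * (/ IZR b) ^ Q)). apply sumn_ext; intros; ring. }
  unfold sum_f. replace (S P - 1)%nat with P by lia. replace (S Q - 1)%nat with Q by lia.
  rewrite !sumn_f_R0. unfold Rminus. f_equal.
  - rewrite (sumn_ext _ (fun mu => sumn (fun k => (-1) ^ mu * (binom P k *
          ((/ IZR c) ^ (Q + k) * euler_fun (Q + k) (IZR c * ((INR mu + y) / IZR b) + z)) *
          ((/ IZR a) ^ (P - k) * euler_fun (P - k) (IZR (- a) * ((INR mu + y) / IZR b) + x)))) (S P)))
      by (intros; rewrite <- sumn_scal; auto).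
    rewrite sumn_swap, sumn_rev. apply sumn_ext. intros i Hi.
    unfold S_pq. change (Z.to_nat b) with nb. rewrite sum_f_R0_sumn_pred by auto.
    replace (S P - 1 - i)%nat with (P - i)%nat by lia.
    replace (S P + S Q - (i + 1) - 1)%nat with (Q + (P - i))%nat by lia.
    replace (i + 1 - 1)%nat with i by lia.
    replace (P - (P - i))%nat with i by lia.
    replace (1 - Z.of_nat (i + 1))%Z with (- Z.of_nat i)%Z by lia.
    replace (1 + Z.of_nat (i + 1) - Z.of_nat (S P) - Z.of_nat (S Q))%Z with (- Z.of_nat (Q + (P - i)))%Z by lia.
    rewrite !pw_neg by auto.
    rewrite binom_C by lia. rewrite <- pascal_step1 by lia.
    rewrite <- (sumn_scal (Binomial.C P i * (/ IZR a) ^ i * (/ IZR c) ^ (Q + (P - i)))).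
    apply sumn_ext; intros; ring.
  - rewrite <- sumn_opp.
    rewrite (sumn_ext _ (fun mu => sumn (fun k => - ((-1) ^ mu * (binom Q k *
          ((/ IZR c) ^ (k + P) * euler_fun (k + P) (IZR c * ((INR mu + x) / IZR a) + z)) *
          ((- / IZR b) ^ (Q - k) * euler_fun (Q - k) (IZR b * ((INR mu + x) / IZR a) + - y))))) (S Q))).
    2:{ intros. rewrite sumn_opp, sumn_scal. auto. }
    rewrite sumn_swap, sumn_rev. apply sumn_ext. intros i Hi.
    unfold S_pq. change (Z.to_nat a) with na. rewrite sum_f_R0_sumn_pred by auto.
    replace (S Q - 1 - i)%nat with (Q - i)%nat by lia.
    replace (S P + S Q - (i + 1) - 1)%nat with (Q - i + P)%nat by lia.
    replace (i + 1 - 1)%nat with i by lia.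
    replace (Q - (Q - i))%nat with i by lia.
    replace (1 - Z.of_nat (i + 1))%Z with (- Z.of_nat i)%Z by lia.
    replace (1 + Z.of_nat (i + 1) - Z.of_nat (S P) - Z.of_nat (S Q))%Z with (- Z.of_nat (Q - i + P))%Z by lia.
    rewrite !pw_neg by auto.
    rewrite binom_C by lia. rewrite <- pascal_step1 by lia.
    replace (- / IZR b) with (-1 * / IZR b) by ring. rewrite Rpow_mult_distr, (pow_add (-1) i 1).
    rewrite <- (sumn_scal (Binomial.C Q i * ((-1) ^ i * (-1) ^ 1) * (/ IZR b) ^ i * (/ IZR c) ^ (Q - i + P))).
    apply sumn_ext; intros; ring.
Qed.
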